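(* Let $\mathcal{R}$ be a finite valuation ring with residue field of cardinality $q$ and with uniformizer of nilpotency degree $r$ (so $|\mathcal{R}|=q^r$). Let $\mathcal{R}^0$ denote the set of non-units of $\mathcal{R}$. Then there is a constant $c>0$ depending only on $r$ such that for every set $A\subset\mathcal{R}$ with $A\cap\mathcal{R}^0=\emptyset$ and $A\cap(\mathcal{R}^0-1)=\emptyset$ (i.e. every $a\in A$ satisfies that $a$ and $a+1$ are units), \[|A(A+1)|\ \ge\ c\min\left\{\sqrt{q^r|A|},\ \frac{|A|^2}{\sqrt{q^{2r-1}}}\right\},\] where $A(A+1)=\{a(b+1):a,b\in A\}$.
   Context: A finite valuation ring is a finite commutative ring with identity that is local (has a unique maximal ideal) and principal (every ideal is principal); its maximal ideal is generated by a non-unit $z$ (a uniformizer), the residue field $\mathcal{R}/(z)$ has $q$ elements, and $r$ is the least integer with $z^r=0$. $\mathcal{R}^0-1=\{t-1:t\in\mathcal{R}^0\}$. *)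

(* Defs.v *)
From HB Require Import structures.
From mathcomp Require Import all_boot all_order all_algebra.
Set Implicit Arguments. Unset Strict Implicit. Unset Printing Implicit Defensive.
Import Order.TTheory GRing.Theory Num.Theory.
Local Open Scope ring_scope.

Section FVR.
Variable R : finComUnitRingType.

Definition is_ideal (I : {set R}) : Prop :=
  [/\ 0 \in I,
      (forall x y, x \in I -> y \in I -> x + y \in I) &
      (forall a x, x \in I -> a * x \in I)].

Definition pideal (g : R) : {set R} := [set a * g | a : R].

Definition is_maximal_ideal (M : {set R}) : Prop :=
  [/\ is_ideal M, M != setT &
      forall J, is_ideal J -> M \subset J -> J = M \/ J = setT].

Definition is_local : Prop :=
  exists M, is_maximal_ideal M /\ forall M', is_maximal_ideal M' -> M' = M.

Definition is_principal_ring : Prop :=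
  forall I, is_ideal I -> exists g, I = pideal g.

Definition finite_valuation_ring : Prop := is_local /\ is_principal_ring.

Definition uniformizer (z : R) : Prop :=
  z \isn't a GRing.unit /\ is_maximal_ideal (pideal z).

(* cardinality of the residue ring R/(z): number of cosets of (z) *)
Definition residue_card (z : R) : nat :=
  #|[set [set x + m | m in pideal z] | x : R]|.

Definition nil_degree (z : R) (r : nat) : Prop :=
  z ^+ r = 0 /\ forall k, (k < r)%N -> z ^+ k != 0.

Definition prodshift (A : {set R}) : {set R} :=
  [set a * (b + 1) | a in A, b in A].

End FVR.

(* Main.v *)
Require Import Defs.
From HB Require Import structures.
From mathcomp Require Import all_boot all_order all_algebra.
From mathcomp Require Import all_reals.
From mathcomp Require Import ring lra.
Import Order.TTheory GRing.Theory Num.Theory.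
Local Open Scope ring_scope.
Set Implicit Arguments. Unset Strict Implicit. Unset Printing Implicit Defensive.

Section RingPart.
Variable R : finComUnitRingType.

Lemma mem_pideal (g x : R) : (x \in pideal g) = [exists a, x == a * g].
Proof.
apply/imsetP/existsP => [[a _ ->]|[a /eqP ->]]; first by exists a.
by exists a.
Qed.

Lemma pidealM (g a : R) : a * g \in pideal g.
Proof. by rewrite mem_pideal; apply/existsP; exists a. Qed.

Lemma pidealP (g x : R) : reflect (exists a, x = a * g) (x \in pideal g).
Proof.
rewrite mem_pideal; apply: (iffP existsP) => [[a /eqP]|[a ->]]; by exists a.
Qed.

Lemma pidealD (g x y : R) : x \in pideal g -> y \in pideal g -> x + y \in pideal g.
Proof. by move=> /pidealP[a ->] /pidealP[b ->]; rewrite -mulrDl pidealM. Qed.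

Lemma pidealN (g x : R) : x \in pideal g -> - x \in pideal g.
Proof. by move=> /pidealP[a ->]; rewrite -mulNr pidealM. Qed.

Lemma pideal0 (g : R) : (0 : R) \in pideal g.
Proof. by rewrite -(mul0r g) pidealM. Qed.

Lemma pidealMl (g a x : R) : x \in pideal g -> a * x \in pideal g.
Proof. by move=> /pidealP[b ->]; rewrite mulrA pidealM. Qed.

Lemma nil_unit (y : R) n : y ^+ n = 0 -> (1 - y) \is a GRing.unit.
Proof.
move=> yn; apply/unitrPr; exists (\sum_(i < n) y ^+ i).
have := subrX1 y n; rewrite yn sub0r => h.
by rewrite -opprB mulNr -h opprK.
Qed.

Variables (z : R) (r : nat).
Hypothesis Hz : uniformizer z.
Hypothesis Hr : nil_degree z r.

Lemma nonunit_in (x : R) : x \isn't a GRing.unit -> x \in pideal z.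
Proof.
move=> xn.
case: Hz => _ [_ _ Hmax].
pose J := [set a * z + b * x | a : R, b : R].
have memJ a b : a * z + b * x \in J by apply/imset2P; exists a b.
have JP w : reflect (exists a b, w = a * z + b * x) (w \in J).
  apply: (iffP imset2P) => [[a b _ _ ->]|[a [b ->]]]; [by exists a, b| by exists a b].
have idJ : is_ideal J.
  split.
  - by have := memJ 0 0; rewrite !mul0r addr0.
  - move=> u v /JP[a [b ->]] /JP[c [d ->]].
    by have := memJ (a + c) (b + d); rewrite !mulrDl addrACA.
  - move=> c u /JP[a [b ->]].
    by have := memJ (c * a) (c * b); rewrite mulrDr !mulrA.
have sub : pideal z \subset J.
  apply/subsetP => w /pidealP[a ->]; by have := memJ a 0; rewrite mul0r addr0.
case: (Hmax J idJ sub) => [<-|JT].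
  by have := memJ 0 1; rewrite mul0r add0r mul1r.
have : (1 : R) \in J by rewrite JT inE.
case/JP => a [b] e.
have u1 : (1 - a * z) \is a GRing.unit.
  apply: (@nil_unit _ r); rewrite exprMn; case: Hr => -> _; by rewrite mulr0.
have : (b * x) \is a GRing.unit by rewrite (_ : b * x = 1 - a * z) // e [a * z + _]addrC addrK.
by rewrite unitrM (negbTE xn) andbF.
Qed.


Lemma keyA3 k d : (k < r)%N -> (d * z ^+ k \in pideal (z ^+ k.+1)) = (d \in pideal z).
Proof.
move=> kr; apply/idP/idP.
  case/pidealP => b e.
  have e2 : (d - b * z) * z ^+ k = 0 by rewrite mulrBl e exprS !mulrA subrr.
  have : (d - b * z) \in pideal z.
    apply: nonunit_in; apply/negP => u.
    case: Hr => _ /(_ k kr) /eqP; apply.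
    by rewrite -(mulKr u (z ^+ k)) e2 mulr0.
  by move/pidealD => /(_ _ (pidealM z b)); rewrite subrK.
by case/pidealP => b ->; rewrite -mulrA -exprS pidealM.
Qed.

End RingPart.

Definition cos (R : finComUnitRingType) (J : {set R}) x := [set x + m | m in J].

Lemma mem_cos (R : finComUnitRingType) (J : {set R}) x w : (w \in cos J x) = (w - x \in J).
Proof.
apply/imsetP/idP => [[m mJ ->]|wJ]; first by rewrite addrC addKr.
by exists (w - x) => //; rewrite addrC subrK.
Qed.

Lemma card_cos (R : finComUnitRingType) (J : {set R}) x : #|cos J x| = #|J|.
Proof. by apply: card_imset; apply: addrI. Qed.

Lemma cos_pideal_eq (R : finComUnitRingType) (g x y : R) :
  (cos (pideal g) y == cos (pideal g) x) = (y - x \in pideal g).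
Proof.
apply/eqP/idP => [e|yx].
  have : y \in cos (pideal g) y by rewrite mem_cos subrr pideal0.
  by rewrite e mem_cos.
apply/setP => w; rewrite !mem_cos; apply/idP/idP => h.
  have -> : w - x = (w - y) + (y - x) by rewrite addrA subrK.
  by rewrite pidealD.
have -> : w - y = (w - x) + - (y - x) by rewrite opprB addrA subrK.
by rewrite pidealD ?pidealN.
Qed.

Lemma card_fibers (T Y : finType) (D : {set T}) (F : T -> Y) m :
  (forall x, x \in D -> #|[set y in D | F y == F x]| = m) -> #|D| = (#|F @: D| * m)%N.
Proof.
move=> H.
rewrite -sum1_card (partition_big_imset F) /= -sum_nat_const.
apply: eq_bigr => j /imsetP[x xD ->].
by rewrite -(H x xD) -sum1_card; apply: eq_bigl => y; rewrite inE.
Qed.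

Section Counting.
Variable R : finComUnitRingType.
Variables (z : R) (r : nat).
Hypothesis Hz : uniformizer z.
Hypothesis Hr : nil_degree z r.

Lemma L1 : #|[set: R]| = (residue_card z * #|pideal z|)%N.
Proof.
have -> : residue_card z = #|cos (pideal z) @: [set: R]|.
  rewrite /residue_card; apply: eq_card => C.
  apply/imsetP/imsetP => [[x _ ->]|[x _ ->]]; by exists x.
apply: card_fibers => x _; rewrite -(card_cos (pideal z) x); apply: eq_card => y.
by rewrite !inE cos_pideal_eq mem_cos.
Qed.

Definition G k (x : R) := cos (pideal (z ^+ k.+1)) (x * z ^+ k).

Lemma L2 k : (k < r)%N -> #|[set: R]| = (#|G k @: [set: R]| * #|pideal z|)%N.
Proof.
move=> kr; apply: card_fibers => x _; rewrite -(card_cos (pideal z) x); apply: eq_card => y.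
rewrite !inE /G cos_pideal_eq mem_cos -mulrBl.
by rewrite (keyA3 Hz Hr).
Qed.

Lemma pideal_sub k : pideal (z ^+ k.+1) \subset pideal (z ^+ k).
Proof. by apply/subsetP => w /pidealP[a ->]; rewrite exprS mulrA pidealM. Qed.

Lemma L3 k : #|pideal (z ^+ k)| = (#|G k @: [set: R]| * #|pideal (z ^+ k.+1)|)%N.
Proof.
have -> : G k @: [set: R] = cos (pideal (z ^+ k.+1)) @: pideal (z ^+ k).
  apply/setP => C; apply/imsetP/imsetP => [[x _ ->]|[y /pidealP[a ->] ->]].
    by exists (x * z ^+ k) => //; rewrite pidealM.
  by exists a.
apply: card_fibers => y yI; rewrite -(card_cos (pideal (z ^+ k.+1)) y); apply: eq_card => w.
rewrite !inE cos_pideal_eq mem_cos andb_idl // => h.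
have -> : w = (w - y) + y by rewrite subrK.
by rewrite pidealD // (subsetP (pideal_sub k)).
Qed.

Lemma r_pos : (0 < r)%N.
Proof.
case: Hr => H0 _; case: r H0 => // ; rewrite expr0 => /eqP; by rewrite oner_eq0.
Qed.

Lemma card_I k : (k < r)%N -> #|pideal (z ^+ k)| = (residue_card z * #|pideal (z ^+ k.+1)|)%N.
Proof.
move=> kr; rewrite L3; congr (_ * _)%N.
have h := L2 kr; rewrite L1 in h.
have pos : (0 < #|pideal z|)%N by apply/card_gt0P; exists 0; rewrite pideal0.
by apply/eqP; rewrite -(eqn_pmul2r pos) h.
Qed.

Lemma card_I_pow j : (j <= r)%N -> #|pideal (z ^+ (r - j))| = (residue_card z ^ j)%N.
Proof.
elim: j => [_|j IH jr].
  rewrite subn0; case: Hr => -> _.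
  have -> : pideal (0 : R) = [set 0].
    apply/setP => w; rewrite inE; apply/pidealP/eqP => [[a ->]|->]; first by rewrite mulr0.
    by exists 0; rewrite mulr0.
  by rewrite cards1.
have kr : (r - j.+1 < r)%N by rewrite ltn_subrL r_pos.
rewrite card_I // expnS; congr (_ * _)%N.
by rewrite -IH ?(ltnW jr) // subnSK.
Qed.

Lemma cardR : #|R| = (residue_card z ^ r)%N.
Proof.
rewrite -card_I_pow // subnn expr0; apply: eq_card => w.
by apply/esym/pidealP; exists w; rewrite mulr1.
Qed.

Lemma card_nonunits : (#|[set x : R | x \isn't a GRing.unit]| <= residue_card z ^ (r - 1))%N.
Proof.
rewrite -card_I_pow ?leq_subr // subKn ?r_pos // expr1.
apply: subset_leq_card; apply/subsetP => x; rewrite inE; exact: (nonunit_in Hz Hr).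
Qed.

End Counting.

Lemma CS (K : realFieldType) (T : finType) (P : {pred T}) (g : T -> K) :
  (\sum_(i in P) g i) ^+ 2 <= #|P|%:R * \sum_(i in P) g i ^+ 2.
Proof.
have h : 0 <= \sum_(i in P) \sum_(j in P) (g i - g j) ^+ 2.
  by apply: sumr_ge0 => i _; apply: sumr_ge0 => j _; apply: sqr_ge0.
set a := \sum_(i in P) g i; set b := \sum_(i in P) g i ^+ 2; set n : K := #|P|%:R.
have inner i : \sum_(j in P) (g i - g j) ^+ 2 = n * g i ^+ 2 + b - 2 * g i * a.
  rewrite /a /b /n.
  have sq (x y : K) : (x - y) ^+ 2 = x ^+ 2 + y ^+ 2 - 2 * x * y by ring.
  under eq_bigr => j _ do rewrite sq.
  rewrite big_split /= big_split /= sumr_const sumrN -big_distrr /= mulr_natl.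
  ring.
have e : \sum_(i in P) \sum_(j in P) (g i - g j) ^+ 2 = 2 * (n * b - a ^+ 2).
  under eq_bigr => i _ do rewrite inner.
  rewrite big_split /= big_split /= sumr_const sumrN -big_distrr /= -big_distrl /= -big_distrr /=.
  rewrite -/a -/b mulr_natl; ring.
by move: h; rewrite e pmulr_rge0 // subr_ge0.
Qed.

Lemma sum_eq1 (T : finType) (c : T) : (\sum_(y : T) (y == c : nat))%N = 1%N.
Proof. by rewrite (bigD1 c) //= eqxx big1 // => y /negbTE ->. Qed.

Section Incidence.
Variable R : finComUnitRingType.
Variable A : {set R}.
Hypothesis HA : forall a, a \in A -> a \is a GRing.unit /\ a + 1 \is a GRing.unit.

Definition lfun (bc : R * R) : R * R := ((bc.1 + 1) / bc.2, bc.1 + 1).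
Definition Ls := lfun @: setX A A.
Definition Ps := setX (prodshift A) (prodshift A).
Definition inc (p l : R * R) : bool := p.2 == l.1 * p.1 - l.2.
Definition f (p : R * R) : nat := (\sum_(l in Ls) (inc p l : nat))%N.

Lemma card_Ls : #|Ls| = (#|A| * #|A|)%N.
Proof.
rewrite /Ls card_in_imset ?cardsX //.
move=> [b c] [b' c'].
rewrite !inE /= => /andP[bA cA] /andP[b'A c'A] e.
have e1 := congr1 fst e; have e2 := congr1 snd e; rewrite /= in e1 e2.
have eb : b = b' by apply: (addIr 1).
subst b'; congr (_, _).
have u := (HA bA).2.
by apply: invr_inj; apply: (mulrI u).
Qed.

Lemma lower : (#|A| ^ 3 <= \sum_(p in Ps) f p)%N.
Proof.
pose phi (t : R * R * R) := ((t.2 * (t.1.1 + 1), t.1.1 * (t.1.2 + 1)),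
                             lfun (t.1.2, t.2)).
have -> : (\sum_(p in Ps) f p = #|[set pl | (pl.1 \in Ps) && ((pl.2 \in Ls) && inc pl.1 pl.2)]|)%N.
  transitivity (\sum_(p in Ps) \sum_(l in Ls | inc p l) 1)%N.
    apply: eq_bigr => p _.
    by rewrite /f big_mkcondr /=; apply: eq_bigr => l _; case: inc.
  rewrite pair_big_dep /= sum1_card; apply: eq_card => pl; by rewrite inE.
have -> : (#|A| ^ 3 = #|phi @: setX (setX A A) A|)%N.
  rewrite card_in_imset; first by rewrite !cardsX !expnS expn0 muln1 mulnA.
  move=> [[a b] c] [[a' b'] c']; rewrite !inE /= => /andP[/andP[aA bA] cA] /andP[/andP[a'A b'A] c'A].
  move=> e; have e2 := congr1 (fun x => x.2.2) e; have e1 := congr1 (fun x => x.2.1) e.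
  have e3 := congr1 (fun x => x.1.1) e; rewrite /= in e1 e2 e3; have eb : b = b' by apply: (addIr 1).
  subst b'; have ec : c = c'.
    by apply: invr_inj; apply: (mulrI (HA bA).2).
  subst c'; congr (_, _, _); apply: (addIr 1); exact: (mulrI (HA cA).1 e3).
apply: subset_leq_card; apply/subsetP => x /imsetP[[[a b] c]].
rewrite !inE /= => /andP[/andP[aA bA] cA] -> /=.
apply/and3P; split.
- by apply/andP; split; apply/imset2P;
    [exists c a| exists a b].
- by apply/imsetP; exists (b, c) => //; rewrite inE bA cA.
- rewrite /inc /lfun /= mulrA divrK ?(HA cA).1 //.
  by apply/eqP; ring.
Qed.


Lemma sum1T (T : finType) : (\sum_(x : T) 1)%N = #|T|.
Proof. by rewrite -sum1_card. Qed.

Lemma inc_count l : (\sum_(p : R * R) (inc p l : nat))%N = #|R|.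
Proof.
transitivity (\sum_(x : R) \sum_(y : R) (inc (x, y) l : nat))%N.
  by rewrite pair_big; apply: eq_bigr => -[x y].
rewrite -sum1T; apply: eq_bigr => x _; rewrite /inc /=; exact: sum_eq1.
Qed.

Lemma sum_f : (\sum_(p : R * R) f p)%N = (#|R| * #|Ls|)%N.
Proof.
rewrite /f exchange_big /= mulnC -sum_nat_const; apply: eq_bigr => l _.
exact: inc_count.
Qed.


Definition H (l l' : R * R) : nat :=
  (\sum_(x : R) ((l.1 * x - l.2 == l'.1 * x - l'.2)%R : nat))%N.

Lemma sum_eq2 (T : finType) (c c' : T) :
  (\sum_(y : T) ((y == c) * (y == c') : nat))%N = (c == c').
Proof. by rewrite (bigD1 c) //= eqxx mul1n big1 ?addn0 // => y /negbTE ->. Qed.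

Lemma pair_count l l' : (\sum_(p : R * R) (inc p l : nat) * inc p l')%N = H l l'.
Proof.
transitivity (\sum_(x : R) \sum_(y : R) ((inc (x, y) l : nat) * inc (x, y) l'))%N.
  by rewrite pair_big; apply: eq_bigr => -[x y].
apply: eq_bigr => x _; rewrite /inc /=; exact: sum_eq2.
Qed.

Lemma H_unit l l' : (l.1 - l'.1) \is a GRing.unit -> (H l l' <= 1)%N.
Proof.
move=> u; set d := l.1 - l'.1.
rewrite -(sum_eq1 (d^-1 * (l.2 - l'.2))); apply: leq_sum => x _.
case: eqP => // e; rewrite (_ : x = d^-1 * (l.2 - l'.2)) ?eqxx //.
have dx : d * x = l.2 - l'.2.
  apply/eqP; rewrite -subr_eq0.
  have -> : d * x - (l.2 - l'.2) = (l.1 * x - l.2) - (l'.1 * x - l'.2) by rewrite /d; ring.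
  by rewrite e subrr.
by rewrite -dx mulKr.
Qed.

Definition nu := #|[set x : R | x \isn't a GRing.unit]|.

Lemma card_shift (m : R) : #|[set m' : R | (m - m') \isn't a GRing.unit]| = nu.
Proof.
have -> : [set m' : R | (m - m') \isn't a GRing.unit] =
          (fun u => m - u) @: [set x : R | x \isn't a GRing.unit].
  apply/setP => m'; rewrite inE; apply/idP/imsetP => [h|[u]].
    exists (m - m'); last by rewrite opprB addrC subrK.
    by rewrite inE.
  by rewrite inE => hu ->; rewrite opprB addrC subrK.
rewrite card_imset // => u v e.
by apply: oppr_inj; apply: (addrI m).
Qed.

Lemma H_nonunit (l : R * R) :
  (\sum_(l' : R * R | ((l.1 - l'.1) \isn't a GRing.unit)%R) H l l' <= #|R| * nu)%N.
Proof.
rewrite /H exchange_big /= -sum1T big_distrl /=; apply: leq_sum => x _.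
rewrite mul1n -(card_shift l.1) -sum1_card.
rewrite (eq_bigl (fun p : R * R => ((l.1 - p.1) \isn't a GRing.unit) && true)); last by move=> p; rewrite andbT.
rewrite -(pair_big_dep (fun m' => (l.1 - m') \isn't a GRing.unit) (fun _ _ => true)
  (fun m' k' => ((l.1 * x - l.2 == m' * x - k') : nat))) /=.
rewrite [X in (_ <= X)%N](eq_bigl (fun m' => (l.1 - m') \isn't a GRing.unit)); last by move=> m'; rewrite inE.
apply: leq_sum => m' _.
rewrite (eq_bigr (fun k' => (k' == m' * x - (l.1 * x - l.2) : nat))) ?sum_eq1 // => k' _.
by congr nat_of_bool; apply/eqP/eqP => e; rewrite e; ring.
Qed.


Lemma sum_f2 : (\sum_(p : R * R) f p ^ 2 <= #|Ls| * (#|Ls| + #|R| * nu))%N.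
Proof.
have e : (\sum_(p : R * R) f p ^ 2 = \sum_(l in Ls) \sum_(l' in Ls) H l l')%N.
  transitivity (\sum_(p : R * R) \sum_(l in Ls) \sum_(l' in Ls) (inc p l : nat) * inc p l')%N.
    apply: eq_bigr => p _; rewrite -mulnn /f big_distrl /=; apply: eq_bigr => l _.
    by rewrite big_distrr.
  rewrite exchange_big /=; apply: eq_bigr => l _.
  rewrite exchange_big /=; apply: eq_bigr => l' _; exact: pair_count.
rewrite e -sum_nat_const; apply: leq_sum => l _.
rewrite (bigID (fun l' : R * R => ((l.1 - l'.1) \is a GRing.unit)%R)) /=.
apply: leq_add.
  apply: (@leq_trans (\sum_(l' in Ls | ((l.1 - l'.1) \is a GRing.unit)%R) 1)%N).
    by apply: leq_sum => l' /andP[_ u]; apply: H_unit.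
  rewrite -sum1_card big_mkcondr /=; apply: leq_sum => l' _; by case: ifP.
apply: leq_trans (H_nonunit l).
rewrite big_mkcond [X in (_ <= X)%N]big_mkcond /=; apply: leq_sum => l' _.
by case: (l' \in Ls) => //=; case: ifP.
Qed.


Lemma incidence_real (K : realFieldType) :
  ((#|R|%:R : K) * (\sum_(p in Ps) f p)%N%:R - #|Ps|%:R * #|Ls|%:R) ^+ 2
    <= #|Ps|%:R * ((#|R|%:R : K) ^+ 3 * #|Ls|%:R * nu%:R).
Proof.
set N : K := #|R|%:R; set Lc : K := #|Ls|%:R; set Pc : K := #|Ps|%:R.
set I : K := (\sum_(p in Ps) f p)%N%:R.
pose g (p : R * R) : K := N * (f p)%:R - Lc.
have e1 : N * I - Pc * Lc = \sum_(p in Ps) g p.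
  rewrite /g sumrB sumr_const /I natr_sum big_distrr /= /Pc mulr_natl.
  by [].
rewrite e1; apply: le_trans (CS _ _) _; rewrite -/Pc.
apply: ler_wpM2l; first by rewrite /Pc ler0n.
apply: (@le_trans _ _ (\sum_(p : R * R) g p ^+ 2)).
  rewrite [X in _ <= X](bigID (fun p => p \in Ps)) /= lerDl.
  by apply: sumr_ge0 => p _; apply: sqr_ge0.
have sq (p : R * R) : g p ^+ 2 = N ^+ 2 * (f p ^ 2)%N%:R - (N * Lc * 2) * (f p)%:R + Lc ^+ 2.
  by rewrite /g natrX; ring.
under eq_bigr => p _ do rewrite sq.
rewrite big_split /= sumrB -!big_distrr /= -!natr_sum sum_f sumr_const card_prod.
rewrite -mulr_natr !natrM -/N -/Lc.
set F2 : K := (\sum_i f i ^ 2)%N%:R.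
have h2 : F2 <= Lc * (Lc + N * nu%:R).
  by have := sum_f2; rewrite -(ler_nat K) natrM natrD natrM.
have hN : 0 <= N ^+ 2 by apply: sqr_ge0.
have h3 := ler_wpM2l hN h2.
have E : N ^+ 3 * Lc * nu%:R = N ^+ 2 * (Lc * (Lc + N * nu%:R)) - N * Lc * 2 * (N * Lc) + Lc ^+ 2 * (N * N).
  by rewrite -[Lc ^+ 2]/(Lc ^+ 2); ring.
have T : ((#|Ls| *+ (#|R| * #|R|))%:R : K) = Lc * (N * N).
  have T2 : (#|Ls| *+ (#|R| * #|R|))%R = (#|Ls| * (#|R| * #|R|))%N :> nat by rewrite -mulr_natr natn.
  by rewrite T2 !natrM -/N -/Lc.
rewrite T mul1r.
apply: le_trans (_ : _ <= N ^+ 2 * (Lc * (Lc + N * nu%:R)) - N * Lc * 2 * (N * Lc) + Lc * (Lc * (N * N))) _.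
  by rewrite lerD2r lerD2r.
by rewrite le_eqVlt; apply/orP; left; apply/eqP; ring.
Qed.

End Incidence.

Lemma final_ineq (K : realType) (a s N Q I : K) :
  0 <= a -> 0 <= s -> 0 < N -> 0 < Q -> a ^+ 3 <= I ->
  (N * I - s ^+ 2 * a ^+ 2) ^+ 2 <= s ^+ 2 * (N ^+ 2 * a ^+ 2 * Q) ->
  2^-1 * Num.min (Num.sqrt (N * a)) (a ^+ 2 / Num.sqrt Q) <= s.
Proof.
move=> a0 s0 N0 Q0 aI h.
have h2 : (0 : K) < 2^-1 by rewrite invr_gt0.
case: (lerP (N * a) (4 * s ^+ 2)) => c.
  apply: (@le_trans _ _ (2^-1 * Num.sqrt (N * a))).
    by apply: ler_wpM2l; [exact: ltW| rewrite ge_min lexx].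
  have : Num.sqrt (N * a) <= Num.sqrt ((2 * s) ^+ 2).
    by rewrite ler_sqrt ?sqr_ge0 // (_ : (2 * s) ^+ 2 = 4 * s ^+ 2) //; ring.
  rewrite sqrtr_sqr ger0_norm ?mulr_ge0 // => hs.
  by rewrite ler_pdivrMl ?ltr0n // mulrC.
apply: (@le_trans _ _ (2^-1 * (a ^+ 2 / Num.sqrt Q))).
  by apply: ler_wpM2l; [exact: ltW| rewrite ge_min lexx orbT].
set u := Num.sqrt Q.
have u0 : 0 < u by rewrite sqrtr_gt0.
have uQ : u ^+ 2 = Q by rewrite sqr_sqrtr // ltW.
have [a00|apos] := eqVneq a 0.
  by rewrite a00 expr0n /= mul0r mulr0.
have ap : 0 < a by rewrite lt_def apos a0.
have NI : N * a ^+ 3 <= N * I by rewrite ler_wpM2l // ltW.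
have w0 : 3 / 4 * (N * a ^+ 3) <= N * I - s ^+ 2 * a ^+ 2.
  have : s ^+ 2 * a ^+ 2 * 4 < N * a * a ^+ 2.
    rewrite -[X in X < _]mulrA [a ^+ 2 * 4]mulrC mulrA ltr_pM2r ?exprn_gt0 //.
    by rewrite mulrC.
  rewrite (_ : N * a * a ^+ 2 = N * a ^+ 3); last by ring.
  lra.
have ww : (3 / 4 * (N * a ^+ 3)) ^+ 2 <= s ^+ 2 * (N ^+ 2 * a ^+ 2 * Q).
  apply: le_trans h; rewrite ler_sqr ?nnegrE //.
    by apply: mulr_ge0; [lra| apply: mulr_ge0; [exact: ltW|exact: exprn_ge0]].
  apply: le_trans w0; apply: mulr_ge0; [lra| apply: mulr_ge0; [exact: ltW|exact: exprn_ge0]].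
have k : (3 / 4 * a ^+ 2) ^+ 2 <= (s * u) ^+ 2.
  have p : 0 < N ^+ 2 * a ^+ 2 by rewrite mulr_gt0 // exprn_gt0.
  rewrite -(ler_pM2l p).
  have eqL : N ^+ 2 * a ^+ 2 * (3 / 4 * a ^+ 2) ^+ 2 = (3 / 4 * (N * a ^+ 3)) ^+ 2 by ring.
  have eqR : N ^+ 2 * a ^+ 2 * (s * u) ^+ 2 = s ^+ 2 * (N ^+ 2 * a ^+ 2 * Q) by rewrite -uQ; ring.
  by rewrite eqL eqR.
have n1 : 0 <= 3 / 4 * a ^+ 2 by apply: mulr_ge0; [lra|exact: exprn_ge0].
have n2 : 0 <= s * u by rewrite mulr_ge0 // ltW.
rewrite ler_sqr ?nnegrE // in k.
rewrite mulrA ler_pdivrMr //.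
lra.
Qed.

Unset Implicit Arguments.

Theorem corollary1p11 (K : realType) (r : nat) :
  exists c : K, 0 < c /\
  forall (R : finComUnitRingType) (z : R) (q : nat),
    finite_valuation_ring R -> uniformizer z -> nil_degree z r ->
    q = residue_card z ->
    forall A : {set R},
      (forall a, a \in A -> a \is a GRing.unit /\ a + 1 \is a GRing.unit) ->
      c * Num.min (Num.sqrt ((q ^ r * #|A|)%:R))
                  ((#|A| ^ 2)%:R / Num.sqrt ((q ^ (2 * r - 1))%:R))
        <= (#|prodshift A|)%:R.
Proof.
exists 2^-1; split; first by rewrite invr_gt0 ltr0n.
move=> R z q _ Hz Hr -> A HA.
set q0 := residue_card z.
have cR : #|R| = (q0 ^ r)%N := cardR Hz Hr.
have cnu : (nu R <= q0 ^ (r - 1))%N := card_nonunits Hz Hr.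
have rp := r_pos Hr.
have q0pos : (0 < q0)%N.
  rewrite lt0n; apply/eqP => q00.
  have : (0 < #|R|)%N by apply/card_gt0P; exists 0.
  by rewrite cR q00 exp0n.
have low := lower HA.
have hinc := incidence_real A K.
rewrite cR cardsX card_Ls // in hinc.
have eQ : (q0 ^ (2 * r - 1) = q0 ^ r * q0 ^ (r - 1))%N.
  by rewrite -expnD; congr (_ ^ _)%N; rewrite mul2n -addnn addnBA.
rewrite natrM !natrX.
apply: (@final_ineq K #|A|%:R #|prodshift A|%:R (q0%:R ^+ r) (q0%:R ^+ (2 * r - 1))
           (\sum_(p in Ps A) f A p)%N%:R).
- exact: ler0n.
- exact: ler0n.
- by rewrite exprn_gt0 // ltr0n.
- by rewrite exprn_gt0 // ltr0n.
- by rewrite -natrX ler_nat.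
rewrite !natrM !natrX -!expr2 in hinc.
apply: le_trans hinc _.
apply: ler_wpM2l; first exact: sqr_ge0.
have hQ : (q0%:R ^+ (2 * r - 1) : K) = q0%:R ^+ r * q0%:R ^+ (r - 1).
  by rewrite -!natrX -natrM eQ.
rewrite hQ.
have hnu : ((nu R)%:R : K) <= q0%:R ^+ (r - 1) by rewrite -natrX ler_nat.
have e1 : (q0%:R ^+ r : K) ^+ 3 * #|A|%:R ^+ 2 * (nu R)%:R =
          ((q0%:R ^+ r) ^+ 2 * #|A|%:R ^+ 2 * q0%:R ^+ r) * (nu R)%:R by ring.
have e2 : ((q0%:R ^+ r) ^+ 2 * #|A|%:R ^+ 2 * (q0%:R ^+ r * q0%:R ^+ (r - 1)) : K) =
          ((q0%:R ^+ r) ^+ 2 * #|A|%:R ^+ 2 * q0%:R ^+ r) * q0%:R ^+ (r - 1) by ring.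
rewrite e1 e2; apply: ler_wpM2l => //.
by rewrite !mulr_ge0 ?exprn_ge0 ?ler0n.
Qed.
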